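(* Let $\{\varphi_n\}$ be a generalized Riesz system in a Hilbert space $\mathcal H$ with constructing pair $(\{e_n\},T)$, and put $\psi^T_n=(T^{-1})^*e_n$, $n\ge0$. Then $(\{\varphi_n\},\{\psi^T_n\})$ is a $(D(T^* ),D(T^{-1}))$-quasi basis, and $T=\big(T_{e,\psi^T}|_{D(T^{-1})}\big)^{-1}$, $(T^{-1})^*=\big(T_{e,\varphi}|_{D(T^* )}\big)^{-1}$.
   Context: A sequence $\{\varphi_n\}$ is a generalized Riesz system if there exist an ONB $\{e_n\}$ and a densely defined closed operator $T$ with densely defined inverse such that $e_n\in D(T)\cap D((T^{-1})^* )$ and $Te_n=\varphi_n$ for all $n$; $(\{e_n\},T)$ is a constructing pair. Inner product linear in the first argument. For a sequence $\{\chi_n\}$, $D(\chi)=\{x:\sum_n|\langle x,\chi_n\rangle|^2<\infty\}$ and $D_\chi$ is its linear span; $T_{e,\chi}$ is the operator with domain $D(\chi)$, $T_{e,\chi}x=\sum_n\langle x,\chi_n\rangle e_n$. For biorthogonal sequences $\{\varphi_n\},\{\psi_n\}$ (i.e. $\langle\varphi_n,\psi_m\rangle=\delta_{nm}$) and dense subspaces $\mathcal D,\mathcal E$ with $D_\psi\subseteq\mathcal D\subseteq D(\varphi)$, $D_\varphi\subseteq\mathcal E\subseteq D(\psi)$, the pair is a $(\mathcal D,\mathcal E)$-quasi basis if $\sum_k\langle x,\varphi_k\rangle\langle\psi_k,y\rangle=\langle x,y\rangle$ for all $x\in\mathcal D$, $y\in\mathcal E$. *)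

(* Defs.v *)
(* Complex Hilbert spaces are modelled as complete
   normed modules over Coquelicot's complex numbers C, together with an inner
   product (linear in the first argument) inducing the norm.  (Possibly
   unbounded) linear operators are modelled by their graphs. *)
From Stdlib Require Import Reals.
From Coquelicot Require Import Coquelicot.
Open Scope R_scope.

Section Hilbert.
Context {H : CompleteNormedModule C_AbsRing}.

Definition is_inner_product (ip : H -> H -> C) : Prop :=
  (forall x y z : H, ip (plus x y) z = Cplus (ip x z) (ip y z)) /\
  (forall (a : C) (x y : H), ip (scal a x) y = Cmult a (ip x y)) /\
  (forall x y : H, ip y x = Cconj (ip x y)) /\
  (forall x : H, Im (ip x x) = 0 /\ 0 <= Re (ip x x)) /\
  (forall x : H, norm x = sqrt (Re (ip x x))).

Definition subspace (D : H -> Prop) : Prop :=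
  D zero /\ (forall x y, D x -> D y -> D (plus x y)) /\
  (forall (a : C) x, D x -> D (scal a x)).

Definition dense (D : H -> Prop) : Prop :=
  forall (x : H) (eps : R), 0 < eps -> exists y, D y /\ norm (minus x y) < eps.

Inductive lin_span (chi : nat -> H) : H -> Prop :=
| ls_zero : lin_span chi zero
| ls_gen : forall n, lin_span chi (chi n)
| ls_plus : forall x y, lin_span chi x -> lin_span chi y -> lin_span chi (plus x y)
| ls_scal : forall (a : C) x, lin_span chi x -> lin_span chi (scal a x).

Definition orthonormal_basis (ip : H -> H -> C) (e : nat -> H) : Prop :=
  (forall n m, ip (e n) (e m) = if Nat.eqb n m then RtoC 1 else RtoC 0) /\
  dense (lin_span e).

Definition op := H -> H -> Prop.
Definition dom (G : op) : H -> Prop := fun x => exists y, G x y.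
Definition ran (G : op) : H -> Prop := fun y => exists x, G x y.

Definition linear_operator (G : op) : Prop :=
  (forall x y1 y2, G x y1 -> G x y2 -> y1 = y2) /\
  G zero zero /\
  (forall x y x' y', G x y -> G x' y' -> G (plus x x') (plus y y')) /\
  (forall (a : C) x y, G x y -> G (scal a x) (scal a y)).

Definition injective_op (G : op) : Prop :=
  forall x1 x2 y, G x1 y -> G x2 y -> x1 = x2.

Definition closed_op (G : op) : Prop :=
  forall (u v : nat -> H) (x y : H),
    (forall n, G (u n) (v n)) ->
    filterlim u eventually (locally x) ->
    filterlim v eventually (locally y) -> G x y.

Definition op_inv (G : op) : op := fun y x => G x y.

Definition op_adj (ip : H -> H -> C) (G : op) : op :=
  fun y z => forall x w, G x w -> ip w y = ip x z.

Definition op_restrict (G : op) (D : H -> Prop) : op := fun x y => D x /\ G x y.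

Definition Dseq (ip : H -> H -> C) (chi : nat -> H) : H -> Prop :=
  fun x => ex_series (fun n => (Cmod (ip x (chi n)))^2).

Definition T_e_chi (ip : H -> H -> C) (e chi : nat -> H) : op :=
  fun x y => Dseq ip chi x /\ is_series (fun n => scal (ip x (chi n)) (e n)) y.

Definition generalized_Riesz_pair (ip : H -> H -> C) (e : nat -> H) (T : op)
    (phi : nat -> H) : Prop :=
  orthonormal_basis ip e /\
  linear_operator T /\ dense (dom T) /\ closed_op T /\
  injective_op T /\ dense (dom (op_inv T)) /\
  (forall n, dom T (e n) /\ dom (op_adj ip (op_inv T)) (e n)) /\
  (forall n, T (e n) (phi n)).

Definition biorthogonal (ip : H -> H -> C) (phi psi : nat -> H) : Prop :=
  forall n m, ip (phi n) (psi m) = if Nat.eqb n m then RtoC 1 else RtoC 0.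

Definition quasi_basis (ip : H -> H -> C) (phi psi : nat -> H)
    (D E : H -> Prop) : Prop :=
  biorthogonal ip phi psi /\
  subspace D /\ dense D /\ subspace E /\ dense E /\
  (forall x, lin_span psi x -> D x) /\ (forall x, D x -> Dseq ip phi x) /\
  (forall x, lin_span phi x -> E x) /\ (forall x, E x -> Dseq ip psi x) /\
  (forall x y, D x -> E y ->
     is_series (V := C_NormedModule)
       (fun k => Cmult (ip x (phi k)) (ip (psi k) y)) (ip x y)).

End Hilbert.

(* Main.v *)
Require Import Defs.
From Stdlib Require Import Reals Lra Psatz Classical ClassicalEpsilon.
From Coquelicot Require Import Coquelicot.
Open Scope R_scope.

Ltac ceq := apply injective_projections; simpl; ring.

Lemma Cmod_sq (t : C) : (Cmod t)^2 = (fst t)^2 + (snd t)^2.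
Proof. unfold Cmod. rewrite pow2_sqrt; [reflexivity| nra]. Qed.

Section Alg.
Context {H : CompleteNormedModule C_AbsRing} (ip : H -> H -> C) (Hip : is_inner_product ip).

Lemma ip_plus_l x y z : ip (plus x y) z = Cplus (ip x z) (ip y z).
Proof. apply Hip. Qed.
Lemma ip_scal_l (a : C) x y : ip (scal a x) y = Cmult a (ip x y).
Proof. apply Hip. Qed.
Lemma ip_sym x y : ip y x = Cconj (ip x y).
Proof. apply Hip. Qed.
Lemma ip_plus_r x y z : ip x (plus y z) = Cplus (ip x y) (ip x z).
Proof.
  rewrite ip_sym, ip_plus_l, (ip_sym y x), (ip_sym z x).
  rewrite Cplus_conj; reflexivity.
Qed.
Lemma ip_scal_r (a : C) x y : ip x (scal a y) = Cmult (Cconj a) (ip x y).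
Proof.
  rewrite ip_sym, ip_scal_l, Cmult_conj, (ip_sym y x); reflexivity.
Qed.
Lemma ip_zero_l y : ip zero y = RtoC 0.
Proof.
  replace (zero : H) with (scal (K := C_AbsRing) zero (zero : H)) by (exact (scal_zero_l (V := CompleteNormedModule.ModuleSpace C_AbsRing H) zero)). rewrite ip_scal_l. ceq.
Qed.
Lemma ip_zero_r y : ip y zero = RtoC 0.
Proof. rewrite ip_sym, ip_zero_l. ceq. Qed.
Lemma ip_opp_l x y : ip (opp x) y = Copp (ip x y).
Proof.
  replace (opp x) with (scal (K := C_AbsRing) (opp one) x) by (exact (scal_opp_one (V := CompleteNormedModule.ModuleSpace C_AbsRing H) x)). rewrite ip_scal_l. ceq.
Qed.
Lemma ip_opp_r x y : ip y (opp x) = Copp (ip y x).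
Proof. rewrite ip_sym, ip_opp_l, Copp_conj, <- ip_sym. reflexivity. Qed.
Lemma ip_minus_l x y z : ip (minus x y) z = Cminus (ip x z) (ip y z).
Proof. unfold minus. rewrite ip_plus_l, ip_opp_l. reflexivity. Qed.
Lemma ip_minus_r x y z : ip z (minus x y) = Cminus (ip z x) (ip z y).
Proof. unfold minus. rewrite ip_plus_r, ip_opp_r. reflexivity. Qed.

Lemma ip_sum_l (f : nat -> H) y N :
  ip (sum_n f N) y = sum_n (G := C_AbelianMonoid) (fun k => ip (f k) y) N.
Proof.
  induction N.
  - rewrite !sum_O. reflexivity.
  - rewrite !sum_Sn, ip_plus_l, IHN. reflexivity.
Qed.

Lemma ip_sum_r (f : nat -> H) y N :
  ip y (sum_n f N) = sum_n (G := C_AbelianMonoid) (fun k => ip y (f k)) N.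
Proof.
  induction N.
  - rewrite !sum_O. reflexivity.
  - rewrite !sum_Sn, ip_plus_r, IHN. reflexivity.
Qed.

Definition nsq (x : H) : R := Re (ip x x).

Lemma nsq_ge0 x : 0 <= nsq x.
Proof. apply Hip. Qed.
Lemma ip_self_im x : Im (ip x x) = 0.
Proof. apply Hip. Qed.
Lemma norm_nsq x : norm x = sqrt (nsq x).
Proof. apply Hip. Qed.
Lemma nsq_norm x : nsq x = norm x ^ 2.
Proof. rewrite norm_nsq. rewrite pow2_sqrt; [reflexivity| apply nsq_ge0]. Qed.
Lemma ip_self x : ip x x = RtoC (nsq x).
Proof.
  apply injective_projections; simpl; [reflexivity| apply ip_self_im].
Qed.
Lemma nsq_zero_eq x : nsq x = 0 -> x = zero.
Proof.
  intro h. apply (norm_eq_zero (V := CompleteNormedModule.NormedModule C_AbsRing H)). rewrite norm_nsq, h. apply sqrt_0.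
Qed.

Lemma nsq_minus_scal a b (t : C) :
  nsq (minus a (scal t b)) =
  nsq a - 2 * Re (Cmult (Cconj t) (ip a b)) + (Cmod t)^2 * nsq b.
Proof.
  unfold nsq. rewrite ip_minus_l, !ip_minus_r, !ip_scal_l, !ip_scal_r.
  rewrite (ip_sym a b), Cmod_sq.
  pose proof (ip_self_im b) as hb.
  destruct t as [t1 t2]. destruct (ip a b) as [c1 c2]. destruct (ip b b) as [d1 d2].
  destruct (ip a a) as [a1 a2].
  simpl in *. subst d2. ring.
Qed.

Lemma nsq_plus_orth a b : ip a b = RtoC 0 -> nsq (plus a b) = nsq a + nsq b.
Proof.
  intro h. unfold nsq. rewrite ip_plus_l, !ip_plus_r, h, (ip_sym a b), h. unfold Re; simpl; ring.
Qed.

Lemma nsq_scal (t : C) a : nsq (scal t a) = (Cmod t)^2 * nsq a.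
Proof.
  unfold nsq. rewrite ip_scal_l, ip_scal_r, Cmod_sq.
  pose proof (ip_self_im a) as hb.
  destruct t as [t1 t2]. destruct (ip a a) as [d1 d2].
  simpl in *. subst d2. ring.
Qed.

Lemma parallelogram a b : nsq (plus a b) + nsq (minus a b) = 2 * nsq a + 2 * nsq b.
Proof.
  unfold nsq. rewrite ip_minus_l, !ip_minus_r, ip_plus_l, !ip_plus_r.
  unfold Re; simpl; ring.
Qed.

Lemma cauchy_schwarz a b : Cmod (ip a b) <= norm a * norm b.
Proof.
  rewrite !norm_nsq. rewrite <- sqrt_mult by apply nsq_ge0.
  rewrite <- (sqrt_pow2 (Cmod (ip a b))) by apply Cmod_ge_0.
  apply sqrt_le_1_alt.
  pose proof (nsq_ge0 a). pose proof (nsq_ge0 b).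
  set (c := ip a b).
  assert (forall s : R, 0 <= nsq a - 2 * s * (Cmod c)^2 + s^2 * (Cmod c)^2 * nsq b).
  { intro s. pose proof (nsq_ge0 (minus a (scal (Cmult (RtoC s) c) b))) as h.
    rewrite nsq_minus_scal in h. fold c in h.
    replace (Re (Cmult (Cconj (Cmult (RtoC s) c)) c)) with (s * (Cmod c)^2) in h.
    2:{ rewrite Cmult_conj, Cmod_sq. destruct c as [c1 c2]. unfold Re; simpl. ring. }
    rewrite Cmod_mult, Cmod_R in h. 
    replace ((Rabs s * Cmod c)^2) with (s^2 * (Cmod c)^2) in h.
    2:{ rewrite Rpow_mult_distr, pow2_abs. reflexivity. }
    lra. }
  set (m := (Cmod c)^2) in *.
  assert (0 <= m) by (unfold m; nra).
  destruct (Req_dec m 0) as [hm|hm].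
  - rewrite hm. nra.
  - destruct (Req_dec (nsq b) 0) as [hb|hb].
    + exfalso. specialize (H2 (nsq a / m + 1)). rewrite hb in H2.
      assert (0 < m) by lra.
      replace (2 * (nsq a / m + 1) * m) with (2 * nsq a + 2 * m) in H2 by (field; lra).
      lra.
    + specialize (H2 (/ nsq b)). assert (0 < nsq b) by lra.
      replace ((/ nsq b)^2 * m * nsq b) with (m / nsq b) in H2 by (field; lra).
      assert (0 <= nsq a - m / nsq b) by (unfold Rdiv in *; nra).
      assert (0 <= nsq a * nsq b - m).
      { replace (nsq a * nsq b - m) with ((nsq a - m / nsq b) * nsq b) by (field; lra). nra. }
      nra.
Qed.

End Alg.

Lemma lim_norm {K : AbsRing} {V : NormedModule K} (u : nat -> V) (x : V) :
  (forall eps, 0 < eps -> exists N, forall n, (N <= n)%nat -> norm (minus (u n) x) < eps) ->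
  filterlim u eventually (locally x).
Proof.
  intros h P [eps Heps]. destruct (h eps (cond_pos eps)) as [N HN].
  exists N. intros n hn. apply Heps. apply norm_compat1. apply HN. exact hn.
Qed.

Lemma norm_lim {K : AbsRing} {V : NormedModule K} (u : nat -> V) (x : V) :
  filterlim u eventually (locally x) ->
  forall eps, 0 < eps -> exists N, forall n, (N <= n)%nat -> norm (minus (u n) x) < eps.
Proof.
  intros h eps heps.
  pose proof (@norm_factor_gt_0 K V) as hf.
  assert (hp : 0 < eps / @norm_factor K V) by (apply Rdiv_lt_0_compat; assumption).
  destruct (h (ball x (mkposreal _ hp))) as [N HN].
  { exists (mkposreal _ hp). tauto. }
  exists N. intros n hn. specialize (HN n hn).
  apply norm_compat2 in HN. simpl in HN.
  replace (@norm_factor K V * (eps / @norm_factor K V)) with eps in HN by (field; lra). exact HN.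
Qed.

Lemma sum_n_zero_C (f : nat -> C) N :
  (forall k, (k <= N)%nat -> f k = RtoC 0) -> sum_n (G := C_AbelianMonoid) f N = RtoC 0.
Proof.
  induction N; intro h.
  - rewrite sum_O. apply h. lia.
  - rewrite sum_Sn, IHN. 2: (intros k hk; apply h; lia).
    rewrite h by lia. ceq.
Qed.

Lemma sum_delta (c : nat -> C) j N :
  sum_n (G := C_AbelianMonoid) (fun k => Cmult (c k) (if Nat.eqb k j then RtoC 1 else RtoC 0)) N
  = if Nat.leb j N then c j else RtoC 0.
Proof.
  induction N.
  - rewrite sum_O. destruct j; simpl; ceq.
  - rewrite sum_Sn, IHN.
    destruct (Nat.leb j N) eqn:E1.
    + apply Nat.leb_le in E1.
      replace (Nat.leb j (S N)) with true by (symmetry; apply Nat.leb_le; lia).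
      replace (Nat.eqb (S N) j) with false by (symmetry; apply Nat.eqb_neq; lia).
      ceq.
    + apply Nat.leb_gt in E1.
      destruct (Nat.eqb (S N) j) eqn:E2.
      * apply Nat.eqb_eq in E2. subst j.
        replace (Nat.leb (S N) (S N)) with true by (symmetry; apply Nat.leb_le; lia). ceq.
      * apply Nat.eqb_neq in E2.
        replace (Nat.leb j (S N)) with false by (symmetry; apply Nat.leb_gt; lia). ceq.
Qed.

Lemma Re_series (f : nat -> C) (l : C) :
  is_series (V := C_NormedModule) f l -> is_series (fun n => Re (f n)) (Re l).
Proof.
  intro h. unfold is_series in *. apply lim_norm. intros eps heps.
  destruct (norm_lim _ _ h eps heps) as [N HN]. exists N. intros n hn.
  specialize (HN n hn).
  assert (E : sum_n (fun n => Re (f n)) n = Re (sum_n (G := C_AbelianMonoid) f n)).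
  { clear. induction n. rewrite !sum_O. reflexivity. rewrite !sum_Sn, IHn. reflexivity. }
  change (Rabs (sum_n (G:=R_AbelianMonoid) (fun n => Re (f n)) n - Re l) < eps).
  rewrite E.
  change (Cmod (Cminus (sum_n (G:=C_AbelianMonoid) f n) l) < eps) in HN.
  eapply Rle_lt_trans; [| exact HN].
  replace (Re (sum_n (G := C_AbelianMonoid) f n) - Re l) with (Re (Cminus (sum_n (G := C_AbelianMonoid) f n) l)).
  apply re_le_Cmod. unfold Re; simpl; ring.
Qed.

Section ONB.
Context {H : CompleteNormedModule C_AbsRing} (ip : H -> H -> C) (Hip : is_inner_product ip)
  (e : nat -> H) (He : orthonormal_basis ip e).

Definition Sx (x : H) (N : nat) : H := sum_n (fun k => scal (ip x (e k)) (e k)) N.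

Lemma S_ip_e x N j : (j <= N)%nat -> ip (Sx x N) (e j) = ip x (e j).
Proof.
  intro hj. unfold Sx. rewrite (ip_sum_l ip Hip).
  rewrite (sum_n_ext _ (fun k => Cmult (ip x (e k)) (if Nat.eqb k j then RtoC 1 else RtoC 0))).
  - rewrite sum_delta. replace (Nat.leb j N) with true by (symmetry; apply Nat.leb_le; lia).
    reflexivity.
  - intro k. rewrite (ip_scal_l ip Hip). destruct He as [Ho _]. rewrite Ho. reflexivity.
Qed.

Lemma resid_orth_e x N j : (j <= N)%nat -> ip (minus x (Sx x N)) (e j) = RtoC 0.
Proof.
  intro hj. rewrite (ip_minus_l ip Hip), S_ip_e by exact hj. ceq.
Qed.

Lemma orth_S x N w : (forall j, (j <= N)%nat -> ip w (e j) = RtoC 0) -> ip w (Sx x N) = RtoC 0.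
Proof.
  intro h. unfold Sx. rewrite (ip_sum_r ip Hip). apply sum_n_zero_C.
  intros k hk. rewrite (ip_scal_r ip Hip), h by exact hk. ceq.
Qed.

Lemma span_bound y : lin_span e y -> exists M, forall N w, (M <= N)%nat ->
  (forall j, (j <= N)%nat -> ip w (e j) = RtoC 0) -> ip w y = RtoC 0.
Proof.
  induction 1 as [| n | x y _ [M1 h1] _ [M2 h2] | a x _ [M h]].
  - exists 0%nat. intros. apply (ip_zero_r ip Hip).
  - exists n. intros N w hN hw. apply hw. exact hN.
  - exists (max M1 M2). intros N w hN hw. rewrite (ip_plus_r ip Hip), (h1 N w), (h2 N w); try lia; auto. ceq.
  - exists M. intros N w hN hw. rewrite (ip_scal_r ip Hip), (h N w); auto. ceq.
Qed.

Lemma best_approx x y : lin_span e y -> exists M, forall N, (M <= N)%nat ->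
  norm (minus x (Sx x N)) <= norm (minus x y).
Proof.
  intro hy. destruct (span_bound y hy) as [M hM]. exists M. intros N hN.
  set (w := minus x (Sx x N)).
  assert (hw : forall j, (j <= N)%nat -> ip w (e j) = RtoC 0) by (intros; apply resid_orth_e; auto).
  assert (h1 : ip w (minus (Sx x N) y) = RtoC 0).
  { rewrite (ip_minus_r ip Hip), (orth_S x N w hw), (hM N w hN hw). ceq. }
  assert (E : minus x y = plus w (minus (Sx x N) y)) by apply minus_trans.
  rewrite !(norm_nsq ip Hip). apply sqrt_le_1_alt. rewrite E.
  rewrite (nsq_plus_orth ip Hip) by exact h1.
  pose proof (nsq_ge0 ip Hip (minus (Sx x N) y)). lra.
Qed.

Lemma expansion x : is_series (fun k => scal (ip x (e k)) (e k)) x.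
Proof.
  unfold is_series. apply lim_norm. intros eps heps.
  destruct He as [_ Hd]. destruct (Hd x eps heps) as [y [hy hxy]].
  destruct (best_approx x y hy) as [M hM]. exists M. intros n hn.
  fold (Sx x n). rewrite <- norm_opp, opp_minus.
  eapply Rle_lt_trans; [apply hM; exact hn| exact hxy].
Qed.

Lemma parseval u a :
  is_series (V := C_NormedModule) (fun k => Cmult (ip u (e k)) (ip (e k) a)) (ip u a).
Proof.
  pose proof (expansion u) as hu. unfold is_series in *.
  apply lim_norm. intros eps heps.
  assert (hp : 0 < eps / (norm a + 1)).
  { apply Rdiv_lt_0_compat; [lra|]. pose proof (norm_ge_0 a). lra. }
  destruct (norm_lim _ _ hu _ hp) as [N HN]. exists N. intros n hn.
  specialize (HN n hn).
  assert (E : sum_n (G := C_AbelianMonoid) (fun k => Cmult (ip u (e k)) (ip (e k) a)) n = ip (Sx u n) a).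
  { unfold Sx. rewrite (ip_sum_l ip Hip). apply sum_n_ext. intro k. rewrite (ip_scal_l ip Hip). reflexivity. }
  change (Cmod (Cminus (sum_n (G := C_AbelianMonoid) (fun k => Cmult (ip u (e k)) (ip (e k) a)) n) (ip u a)) < eps).
  rewrite E. replace (Cminus (ip (Sx u n) a) (ip u a)) with (ip (minus (Sx u n) u) a)
    by (rewrite (ip_minus_l ip Hip); reflexivity).
  eapply Rle_lt_trans; [apply (cauchy_schwarz ip Hip)|].
  unfold Sx in *.
  pose proof (norm_ge_0 a). pose proof (norm_ge_0 (minus (Sx u n) u)).
  apply Rle_lt_trans with (eps / (norm a + 1) * norm a).
  - apply Rmult_le_compat_r; [exact H0 | apply Rlt_le; exact HN].
  - assert (eps / (norm a + 1) * norm a < eps / (norm a + 1) * (norm a + 1)) by (apply Rmult_lt_compat_l; lra).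
    replace (eps / (norm a + 1) * (norm a + 1)) with eps in H2 by (field; lra). lra.
Qed.

Lemma bessel_D x : Dseq ip e x.
Proof.
  unfold Dseq. exists (Re (ip x x)).
  apply (is_series_ext (fun n => Re (Cmult (ip x (e n)) (ip (e n) x)))).
  - intro n. rewrite (ip_sym ip Hip x (e n)), <- Cmod2_conj. reflexivity.
  - apply Re_series, parseval.
Qed.

End ONB.

Ltac ipsimp ip Hip := repeat first [rewrite (ip_plus_l ip Hip) | rewrite (ip_plus_r ip Hip)
  | rewrite (ip_minus_l ip Hip) | rewrite (ip_minus_r ip Hip) | rewrite (ip_scal_l ip Hip)
  | rewrite (ip_scal_r ip Hip) | rewrite (ip_opp_l ip Hip) | rewrite (ip_opp_r ip Hip)].

Section Proj.
Context {H : CompleteNormedModule C_AbsRing} (ip : H -> H -> C) (Hip : is_inner_product ip).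

Lemma par_mid (p a b m : H) : m = scal (RtoC (/2)) (plus a b) ->
  4 * nsq ip (minus p m) + nsq ip (minus a b)
  = 2 * nsq ip (minus p a) + 2 * nsq ip (minus p b).
Proof.
  intros ->. unfold nsq. ipsimp ip Hip. unfold Re; simpl. field.
Qed.

Lemma var_expand (p x0 x y : H) (t : C) : y = plus x0 (scal t x) ->
  nsq ip (minus p y) =
  nsq ip (minus p x0) - 2 * Re (Cmult (Cconj t) (ip (minus p x0) x)) + (Cmod t)^2 * nsq ip x.
Proof.
  intros ->. rewrite Cmod_sq. unfold nsq. ipsimp ip Hip.
  rewrite (ip_sym ip Hip p x), (ip_sym ip Hip x0 x).
  pose proof (ip_self_im ip Hip x) as hx. unfold Im in hx.
  unfold Re; simpl. rewrite hx. ring.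
Qed.


Lemma small_inv r : 0 < r -> exists N, forall n, (N <= n)%nat -> / INR (S n) < r.
Proof.
  intro hr. destruct (archimed_cor1 r hr) as [N [h1 h2]]. exists N. intros n hn.
  eapply Rle_lt_trans; [| exact h1]. apply Rinv_le_contravar.
  - apply lt_0_INR. exact h2.
  - apply le_INR. lia.
Qed.

Lemma norm_lt_of_nsq v eps : 0 < eps -> nsq ip v < eps^2 -> norm v < eps.
Proof.
  intros he hv. rewrite (nsq_norm ip Hip) in hv. pose proof (norm_ge_0 v).
  destruct (Rlt_or_le (norm v) eps) as [h|h]; [exact h|]. nra.
Qed.

Lemma real_est d eps eta a b A B da db : 0<=d -> 0<eps<=1 -> 0<eta<1 -> (4*d+10)*eta < eps/2 ->
  0<=a -> 0<=b -> 0<=A -> 0<=B -> 0<=da<eta -> 0<=db<eta -> A <= a+da -> B <= b+db ->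
  a^2+b^2 < d+eps/2 -> A^2+B^2 < d+eps.
Proof.
  intros. assert (a < d + 2) by nra. assert (b < d + 2) by nra.
  assert (A^2 <= a^2 + 2*a*da + da^2) by nra.
  assert (B^2 <= b^2 + 2*b*db + db^2) by nra.
  assert (a*da <= (d+2)*eta) by nra. assert (b*db <= (d+2)*eta) by nra.
  assert (da^2 <= eta) by nra. assert (db^2 <= eta) by nra.
  nra.
Qed.

Lemma graph_proj (G : @op H) (G0 : G zero zero)
  (Gp : forall x y x' y', G x y -> G x' y' -> G (plus x x') (plus y y'))
  (Gs : forall (a : C) x y, G x y -> G (scal a x) (scal a y))
  (Gc : closed_op G) (p q : H) :
  exists x0 w0, G x0 w0 /\ forall x w, G x w -> Cplus (ip (minus p x0) x) (ip (minus q w0) w) = RtoC 0.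
Proof.
  set (f := fun x w => nsq ip (minus p x) + nsq ip (minus q w)).
  assert (fge : forall x w, 0 <= f x w).
  { intros. unfold f. pose proof (nsq_ge0 ip Hip (minus p x)). pose proof (nsq_ge0 ip Hip (minus q w)). lra. }
  set (E := fun r => exists x w, G x w /\ r = - f x w).
  destruct (completeness E) as [m [hub hleast]].
  { exists 0. intros r [x [w [_ ->]]]. pose proof (fge x w). lra. }
  { exists (- f zero zero). exists zero, zero. auto. }
  set (d := - m).
  assert (hd : forall x w, G x w -> d <= f x w).
  { intros x w hg. assert (- f x w <= m) by (apply hub; exists x, w; auto). unfold d. lra. }
  assert (hd0 : 0 <= d).
  { assert (m <= 0). { apply hleast. intros r [x [w [_ ->]]]. pose proof (fge x w). lra. } unfold d; lra. }
  assert (happ : forall eps, 0 < eps -> exists x w, G x w /\ f x w < d + eps).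
  { intros eps he. apply NNPP. intro hn.
    assert (m <= m - eps).
    { apply hleast. intros r [x [w [hg ->]]].
      destruct (Rlt_or_le (f x w) (d + eps)) as [h|h].
      - exfalso. apply hn. exists x, w. auto.
      - unfold d in h. lra. }
    lra. }
  assert (hseq : exists s : nat -> H * H, forall n,
    G (fst (s n)) (snd (s n)) /\ f (fst (s n)) (snd (s n)) < d + / INR (S n)).
  { assert (hex : forall n, exists pr : H * H, G (fst pr) (snd pr) /\ f (fst pr) (snd pr) < d + / INR (S n)).
    { intro n. destruct (happ (/ INR (S n))) as [x [w hxw]].
      - apply Rinv_0_lt_compat, lt_0_INR. lia.
      - exists (x, w). exact hxw. }
    exists (fun n => proj1_sig (constructive_indefinite_description _ (hex n))).
    intro n. exact (proj2_sig (constructive_indefinite_description _ (hex n))). }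
  destruct hseq as [s hs].
  set (xs := fun n => fst (s n)). set (ws := fun n => snd (s n)).
  assert (hG : forall n, G (xs n) (ws n)) by (intro n; apply hs).
  assert (hf : forall n, f (xs n) (ws n) < d + / INR (S n)) by (intro n; apply hs).
  assert (hc : forall n k, nsq ip (minus (xs n) (xs k)) + nsq ip (minus (ws n) (ws k))
                          < 2 * / INR (S n) + 2 * / INR (S k)).
  { intros n k.
    set (mx := scal (RtoC (/2)) (plus (xs n) (xs k)) : H).
    set (mw := scal (RtoC (/2)) (plus (ws n) (ws k)) : H).
    pose proof (par_mid p (xs n) (xs k) mx eq_refl) as e1. pose proof (par_mid q (ws n) (ws k) mw eq_refl) as e2.
    assert (hm : G mx mw).
    { apply Gs, Gp; apply hG. }
    pose proof (hd _ _ hm) as h3. pose proof (hf n). pose proof (hf k). unfold f in *. lra. }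
  assert (hcb : forall eps, 0 < eps -> exists N, forall n k, (N <= n)%nat -> (N <= k)%nat ->
            nsq ip (minus (xs n) (xs k)) < eps^2 /\ nsq ip (minus (ws n) (ws k)) < eps^2).
  { intros eps he. destruct (small_inv (eps^2 / 4)) as [N hN].
    { apply Rdiv_lt_0_compat; [nra| lra]. }
    exists N. intros n k hn hk. pose proof (hc n k). pose proof (hN n hn). pose proof (hN k hk).
    pose proof (nsq_ge0 ip Hip (minus (xs n) (xs k))). pose proof (nsq_ge0 ip Hip (minus (ws n) (ws k))).
    split; lra. }
  assert (hxl : exists xl, filterlim xs eventually (locally xl)).
  { refine (proj1 (@filterlim_locally_cauchy nat (CompleteNormedModule.CompleteSpace C_AbsRing H) eventually eventually_filter _) _). intro eps.
    destruct (hcb eps (cond_pos eps)) as [N hN]. exists (fun n => (N <= n)%nat). split.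
    - exists N. auto.
    - intros u v hu hv. apply (norm_compat1 (V := CompleteNormedModule.NormedModule C_AbsRing H)). apply norm_lt_of_nsq; [apply cond_pos|]. apply (hN v u); auto. }
  assert (hwl : exists wl, filterlim ws eventually (locally wl)).
  { refine (proj1 (@filterlim_locally_cauchy nat (CompleteNormedModule.CompleteSpace C_AbsRing H) eventually eventually_filter _) _). intro eps.
    destruct (hcb eps (cond_pos eps)) as [N hN]. exists (fun n => (N <= n)%nat). split.
    - exists N. auto.
    - intros u v hu hv. apply (norm_compat1 (V := CompleteNormedModule.NormedModule C_AbsRing H)). apply norm_lt_of_nsq; [apply cond_pos|]. apply (hN v u); auto. }
  destruct hxl as [xl hxl]. destruct hwl as [wl hwl].
  assert (hGl : G xl wl) by (apply (Gc xs ws); auto).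
  assert (hlt : forall eps, 0 < eps -> eps <= 1 -> f xl wl < d + eps).
  { intros eps he he1.
    set (eta := eps / (8*d + 20 + eps)).
    assert (heta : 0 < eta) by (apply Rdiv_lt_0_compat; lra).
    assert (heta1 : eta < 1).
    { unfold eta. apply (Rmult_lt_reg_r (8*d+20+eps)); [lra|].
      unfold Rdiv. rewrite Rmult_assoc, Rinv_l by lra. lra. }
    assert (heta2 : (4*d+10)*eta < eps/2).
    { unfold eta. apply (Rmult_lt_reg_r (8*d+20+eps)); [lra|].
      unfold Rdiv. rewrite (Rmult_assoc (4*d+10)), Rmult_assoc, Rinv_l by lra. nra. }
    destruct (norm_lim _ _ hxl eta heta) as [N1 h1].
    destruct (norm_lim _ _ hwl eta heta) as [N2 h2].
    destruct (small_inv (eps/2)) as [N3 h3]; [lra|].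
    set (n := (N1 + N2 + N3)%nat).
    specialize (h1 n ltac:(lia)). specialize (h2 n ltac:(lia)). specialize (h3 n ltac:(lia)).
    pose proof (hf n) as hfn.
    assert (t1 : norm (minus p xl) <= norm (minus p (xs n)) + norm (minus (xs n) xl)).
    { rewrite (minus_trans (xs n) p xl). exact (norm_triangle (V := CompleteNormedModule.NormedModule C_AbsRing H) _ _). }
    assert (t2 : norm (minus q wl) <= norm (minus q (ws n)) + norm (minus (ws n) wl)).
    { rewrite (minus_trans (ws n) q wl). exact (norm_triangle (V := CompleteNormedModule.NormedModule C_AbsRing H) _ _). }
    unfold f in *. rewrite !(nsq_norm ip Hip) in *.
    apply (real_est d eps eta (norm (minus p (xs n))) (norm (minus q (ws n))) (norm (minus p xl)) (norm (minus q wl)) (norm (minus (xs n) xl)) (norm (minus (ws n) wl)));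
      try apply norm_ge_0; try assumption; try lra.
    all: try (split; [apply norm_ge_0| assumption]).
    all: eapply Rlt_trans; [exact hfn| lra].
  }
  assert (hle : f xl wl <= d).
  { destruct (Rle_or_lt (f xl wl) d) as [h|h]; [exact h|].
    set (eps := (f xl wl - d) / (f xl wl - d + 1)).
    assert (0 < eps) by (apply Rdiv_lt_0_compat; lra).
    assert (eps <= f xl wl - d).
    { unfold eps. apply (Rmult_le_reg_r (f xl wl - d + 1)); [lra|].
      unfold Rdiv. rewrite Rmult_assoc, Rinv_l by lra. nra. }
    assert (eps <= 1).
    { unfold eps. apply (Rmult_le_reg_r (f xl wl - d + 1)); [lra|].
      unfold Rdiv. rewrite Rmult_assoc, Rinv_l by lra. lra. }
    specialize (hlt eps ltac:(lra) ltac:(lra)). lra. }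
  exists xl, wl. split; [exact hGl|]. intros x w hxw.
  set (c := Cplus (ip (minus p xl) x) (ip (minus q wl) w)).
  set (K := nsq ip x + nsq ip w).
  assert (hK : 0 <= K) by (unfold K; pose proof (nsq_ge0 ip Hip x); pose proof (nsq_ge0 ip Hip w); lra).
  set (sv := / (K + 1)).
  assert (hsv : 0 < sv) by (apply Rinv_0_lt_compat; lra).
  assert (hsvK : sv * K < 1).
  { unfold sv. apply (Rmult_lt_reg_r (K+1)); [lra|]. rewrite Rmult_comm, <- Rmult_assoc, Rmult_inv_r by lra. lra. }
  set (t := Cmult (RtoC sv) c).
  set (x1 := plus xl (scal t x) : H). set (w1 := plus wl (scal t w) : H).
  assert (hG1 : G x1 w1) by (apply Gp; [exact hGl| apply Gs; exact hxw]).
  pose proof (hd x1 w1 hG1) as hd1. unfold f in hd1, hle.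
  rewrite (var_expand p xl x x1 t eq_refl), (var_expand q wl w w1 t eq_refl) in hd1.
  assert (eR : Re (Cmult (Cconj t) (ip (minus p xl) x)) + Re (Cmult (Cconj t) (ip (minus q wl) w))
               = sv * ((fst c)^2 + (snd c)^2)).
  { unfold t, c. unfold Re. simpl. ring. }
  assert (eM : (Cmod t)^2 = sv^2 * ((fst c)^2 + (snd c)^2)).
  { rewrite Cmod_sq. unfold t. simpl. ring. }
  rewrite eM in hd1. fold K in hd1.
  assert (hQ : 0 <= sv * ((fst c)^2 + (snd c)^2) * (sv * K - 2)).
  { unfold K in *. nra. }
  assert (hQ2 : (fst c)^2 + (snd c)^2 <= 0).
  { destruct (Rle_or_lt ((fst c)^2 + (snd c)^2) 0) as [h|h]; [exact h|].
    exfalso. assert (0 < sv * ((fst c)^2 + (snd c)^2)) by nra. nra. }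
  assert (h1 : fst c = 0) by nra. assert (h2 : snd c = 0) by nra.
  apply injective_projections; [exact h1| exact h2].
Qed.

End Proj.

Section Adj.
Context {H : CompleteNormedModule C_AbsRing} (ip : H -> H -> C) (Hip : is_inner_product ip).

Lemma eq_of_minus (u v : H) : minus u v = zero -> u = v.
Proof.
  intro h.
  assert (e1 : u = minus u zero) by (symmetry; exact (minus_zero_r (G := CompleteNormedModule.AbelianGroup C_AbsRing H) u)).
  assert (e2 : minus u zero = plus (minus u v) (minus v zero)) by exact (minus_trans (G := CompleteNormedModule.AbelianGroup C_AbsRing H) v u zero).
  assert (e3 : minus v zero = v) by exact (minus_zero_r (G := CompleteNormedModule.AbelianGroup C_AbsRing H) v).
  rewrite e1, e2, h, e3. exact (plus_zero_l (G := CompleteNormedModule.AbelianMonoid C_AbsRing H) v).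
Qed.

Lemma eq_of_nsq (u v : H) : nsq ip (minus u v) = 0 -> u = v.
Proof. intro h. apply eq_of_minus. apply (nsq_zero_eq ip Hip). exact h. Qed.

Lemma adj_subspace (G : @op H) : subspace (dom (op_adj ip G)).
Proof.
  split; [|split].
  - exists zero. intros x w _. rewrite (ip_zero_r ip Hip), (ip_zero_r ip Hip). reflexivity.
  - intros y1 y2 [z1 h1] [z2 h2]. exists (plus z1 z2). intros x w hxw.
    rewrite !(ip_plus_r ip Hip), (h1 x w hxw), (h2 x w hxw). reflexivity.
  - intros a y [z h]. exists (scal a z). intros x w hxw.
    rewrite !(ip_scal_r ip Hip), (h x w hxw). reflexivity.
Qed.

Lemma inv_subspace (T : @op H) : linear_operator T -> subspace (dom (op_inv T)).
Proof.
  intros [_ [T0 [Tp Ts]]]. split; [|split].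
  - exists zero. exact T0.
  - intros y1 y2 [a1 h1] [a2 h2]. exists (plus a1 a2). apply Tp; assumption.
  - intros a y [b h]. exists (scal a b). apply Ts; assumption.
Qed.

End Adj.

Ltac ipsimp2 ip Hip := repeat first [rewrite (ip_plus_l ip Hip) | rewrite (ip_plus_r ip Hip)
  | rewrite (ip_minus_l ip Hip) | rewrite (ip_minus_r ip Hip) | rewrite (ip_scal_l ip Hip)
  | rewrite (ip_scal_r ip Hip) | rewrite (ip_opp_l ip Hip) | rewrite (ip_opp_r ip Hip)
  | rewrite (ip_zero_l ip Hip) | rewrite (ip_zero_r ip Hip)].
Ltac heq ip Hip := apply (eq_of_nsq ip Hip); unfold nsq; ipsimp2 ip Hip; unfold Re; simpl; ring.

Section Adj2.
Context {H : CompleteNormedModule C_AbsRing} (ip : H -> H -> C) (Hip : is_inner_product ip).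

Lemma norm_tri3 (u v w : H) : u = plus v w -> norm u <= norm v + norm w.
Proof. intros ->. exact (norm_triangle (V := CompleteNormedModule.NormedModule C_AbsRing H) _ _). Qed.

Lemma norm_minus_sym (u v : H) : norm (minus u v) = norm (minus v u).
Proof. rewrite !(norm_nsq ip Hip). f_equal. unfold nsq. ipsimp2 ip Hip. unfold Re; simpl; ring. Qed.

Lemma norm_zero_H : norm (zero : H) = 0.
Proof. rewrite (norm_nsq ip Hip). unfold nsq. rewrite (ip_zero_l ip Hip). simpl. apply sqrt_0. Qed.

Lemma test_heq (x x' d1 d2 : H) : minus (plus x x') (plus d1 d2) = plus (minus x d1) (minus x' d2).
Proof. heq ip Hip. Qed.

Lemma adj_dense (T : @op H) (HTl : linear_operator T) (HTc : closed_op T) :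
  dense (dom (op_adj ip T)).
Proof.
  set (D := dom (op_adj ip T)).
  destruct (adj_subspace ip Hip T) as [D0 [Dp Ds]]. fold D in D0, Dp, Ds.
  set (M := fun m => forall eps, 0 < eps -> exists d, D d /\ norm (minus m d) < eps).
  assert (DM : forall d, D d -> M d).
  { intros d hd eps he. exists d. split; [exact hd|].
    assert (minus d d = zero) by heq ip Hip. rewrite H0. replace (norm _) with 0 by (symmetry; exact norm_zero_H). exact he. }
  set (GM := fun x w : H => M x /\ w = zero).
  assert (G0 : GM zero zero) by (split; [apply DM, D0| reflexivity]).
  assert (Gp : forall x y x' y', GM x y -> GM x' y' -> GM (plus x x') (plus y y')).
  { intros x y x' y' [hx ->] [hx' ->]. split; [| heq ip Hip].
    intros eps he. destruct (hx (eps/2)) as [d1 [hd1 n1]]; [lra|].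
    destruct (hx' (eps/2)) as [d2 [hd2 n2]]; [lra|].
    exists (plus d1 d2). split; [apply Dp; assumption|].
    eapply Rle_lt_trans; [apply (norm_tri3 _ (minus x d1) (minus x' d2)); heq ip Hip|]. lra. }
  assert (Gs : forall (a : C) x y, GM x y -> GM (scal a x) (scal a y)).
  { intros a x y [hx ->]. split; [| heq ip Hip].
    intros eps he. assert (hp : 0 < eps / (Cmod a + 1)).
    { apply Rdiv_lt_0_compat; [lra|]. pose proof (Cmod_ge_0 a). lra. }
    destruct (hx _ hp) as [d [hd nd]].
    exists (scal a d). split; [apply Ds; assumption|].
    assert (E : minus (scal a x) (scal a d) = scal a (minus x d)) by heq ip Hip.
    apply Rle_lt_trans with (norm (scal a (minus x d))); [right; apply f_equal; exact E|].
    eapply Rle_lt_trans; [apply (norm_scal (V := CompleteNormedModule.NormedModule C_AbsRing H))|].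
    change (abs a) with (Cmod a).
    pose proof (Cmod_ge_0 a). pose proof (norm_ge_0 (minus x d)).
    apply Rle_lt_trans with (Cmod a * (eps / (Cmod a + 1))).
    - apply Rmult_le_compat_l; [lra|]. apply Rlt_le. exact nd.
    - assert (Cmod a * (eps / (Cmod a + 1)) < (Cmod a + 1) * (eps / (Cmod a + 1))) by (apply Rmult_lt_compat_r; lra).
      replace ((Cmod a + 1) * (eps / (Cmod a + 1))) with eps in H2 by (field; lra). exact H2. }
  assert (Gc : closed_op GM).
  { intros u v x y huv hu hv. split.
    - intros eps he. destruct (norm_lim _ _ hu (eps/2)) as [N hN]; [lra|].
      destruct (proj1 (huv N) (eps/2)) as [d [hd nd]]; [lra|].
      exists d. split; [exact hd|].
      specialize (hN N (le_n N)). rewrite norm_minus_sym in hN.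
      eapply Rle_lt_trans; [apply (norm_tri3 _ (minus x (u N)) (minus (u N) d)); heq ip Hip|]. lra.
    - assert (hv' : filterlim (fun _ : nat => (zero : H)) eventually (locally y)).
      { eapply filterlim_ext; [| exact hv]. intro n. apply (huv n). }
      assert (hz : filterlim (fun _ : nat => (zero : H)) eventually (locally (zero : H))) by apply filterlim_const.
      exact (filterlim_locally_unique (V := CompleteNormedModule.NormedModule C_AbsRing H) _ _ _ hv' hz). }
  intros y eps he.
  destruct (graph_proj ip Hip GM G0 Gp Gs Gc y zero) as [x0 [w0 [[hx0 ->] horth]]].
  set (r := minus y x0).
  assert (rD : forall d, D d -> ip r d = RtoC 0).
  { intros d hd. pose proof (horth d zero (conj (DM d hd) eq_refl)) as h.
    rewrite (ip_zero_r ip Hip) in h. fold r in h. rewrite <- h. ceq. }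
  assert (hr : r = zero).
  { destruct (graph_proj ip Hip T (proj1 (proj2 HTl)) (proj1 (proj2 (proj2 HTl)))
       (proj2 (proj2 (proj2 HTl))) HTc zero r) as [x1 [w1 [hT1 horth1]]].
    set (v := minus r w1).
    assert (hvD : op_adj ip T v x1).
    { intros x w hxw. specialize (horth1 x w hxw). fold v in horth1.
      rewrite (ip_minus_l ip Hip), (ip_zero_l ip Hip) in horth1.
      rewrite (ip_sym ip Hip v w), (ip_sym ip Hip x1 x).
      assert (ip v w = ip x1 x).
      { pose proof (f_equal fst horth1) as f1. pose proof (f_equal snd horth1) as f2. simpl in f1, f2.
        apply injective_projections; lra. }
      rewrite H0. reflexivity. }
    assert (hrv : ip r v = RtoC 0) by (apply rD; exists x1; exact hvD).
    pose proof (horth1 x1 w1 hT1) as h1. fold v in h1.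
    rewrite (ip_minus_l ip Hip), (ip_zero_l ip Hip) in h1.
    assert (en : nsq ip v = - nsq ip x1).
    { unfold nsq. unfold v at 1. rewrite (ip_minus_l ip Hip). fold v.
      rewrite hrv, (ip_sym ip Hip v w1).
      pose proof (f_equal fst h1) as f1. simpl in f1. unfold Re. simpl. lra. }
    pose proof (nsq_ge0 ip Hip v). pose proof (nsq_ge0 ip Hip x1).
    assert (hv0 : v = zero) by (apply (nsq_zero_eq ip Hip); lra).
    assert (hx10 : x1 = zero) by (apply (nsq_zero_eq ip Hip); lra).
    subst x1. assert (w1 = zero) by (apply (proj1 HTl zero); [exact hT1| exact (proj1 (proj2 HTl))]).
    subst w1. unfold v in hv0. rewrite <- hv0. heq ip Hip. }
  assert (hy : y = x0) by (apply eq_of_minus; exact hr).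
  subst y. exact (hx0 eps he).
Qed.

End Adj2.

Lemma ip_swap_eq {H : CompleteNormedModule C_AbsRing} (ip : H -> H -> C) (Hip : is_inner_product ip) a b c d :
  ip a b = ip c d -> ip b a = ip d c.
Proof. intro h. rewrite (ip_sym ip Hip a b), (ip_sym ip Hip c d), h. reflexivity. Qed.

Lemma series_unique {H : CompleteNormedModule C_AbsRing} (f : nat -> H) (x y : H) :
  is_series f x -> is_series f y -> x = y.
Proof.
  intros h1 h2. exact (filterlim_locally_unique (V := CompleteNormedModule.NormedModule C_AbsRing H) _ _ _ h1 h2).
Qed.

Theorem proposition3p4 (H : CompleteNormedModule C_AbsRing) (ip : H -> H -> C)
  (Hip : is_inner_product ip) (e phi : nat -> H) (T : op)
  (HT : generalized_Riesz_pair ip e T phi)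
  (psiT : nat -> H) (Hpsi : forall n, op_adj ip (op_inv T) (e n) (psiT n)) :
  quasi_basis ip phi psiT (dom (op_adj ip T)) (dom (op_inv T)) /\
  (forall x y, T x y <-> op_inv (op_restrict (T_e_chi ip e psiT) (dom (op_inv T))) x y) /\
  (forall x y, op_adj ip (op_inv T) x y <->
               op_inv (op_restrict (T_e_chi ip e phi) (dom (op_adj ip T))) x y).
Proof.
  destruct HT as [Hon [HTl [HTd [HTc [HTinj [HTid [Hen HTe]]]]]]].
  assert (K1 : forall x u k, op_adj ip T x u -> ip x (phi k) = ip u (e k)).
  { intros x u k h. apply (ip_swap_eq ip Hip). exact (h _ _ (HTe k)). }
  assert (K2 : forall a y k, T a y -> ip y (psiT k) = ip a (e k)).
  { intros a y k h. symmetry. exact (Hpsi k y a h). }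
  assert (K2' : forall a y k, T a y -> ip (psiT k) y = ip (e k) a).
  { intros a y k h. apply (ip_swap_eq ip Hip). apply K2. exact h. }
  assert (K3 : forall k, op_adj ip T (psiT k) (e k)).
  { intros k x w h. symmetry. exact (Hpsi k w x h). }
  assert (K4 : forall x y, op_adj ip (op_inv T) x y <-> op_adj ip T y x).
  { intros x y. split; intros h a b hab; symmetry; exact (h _ _ hab). }
  assert (Dphi : forall x, dom (op_adj ip T) x -> Dseq ip phi x).
  { intros x [u hu]. unfold Dseq.
    apply (ex_series_ext (fun n => (Cmod (ip u (e n)))^2)).
    - intro n. rewrite (K1 x u n hu). reflexivity.
    - apply (bessel_D ip Hip e Hon). }
  assert (Dpsi : forall y, dom (op_inv T) y -> Dseq ip psiT y).
  { intros y [a ha]. unfold Dseq.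
    apply (ex_series_ext (fun n => (Cmod (ip a (e n)))^2)).
    - intro n. rewrite (K2 a y n ha). reflexivity.
    - apply (bessel_D ip Hip e Hon). }
  destruct (adj_subspace ip Hip T) as [A0 [Ap As]].
  destruct (inv_subspace T HTl) as [I0 [Ip Is]].
  split; [|split].
  - split; [|split; [|split; [|split; [|split; [|split; [|split; [|split; [|split]]]]]]]].
    + intros n m. rewrite <- (proj1 Hon n m). symmetry. exact (Hpsi m _ _ (HTe n)).
    + exact (adj_subspace ip Hip T).
    + exact (adj_dense ip Hip T HTl HTc).
    + exact (inv_subspace T HTl).
    + exact HTid.
    + induction 1.
      * exact A0.
      * exists (e n). apply K3.
      * apply Ap; assumption.
      * apply As; assumption.
    + exact Dphi.
    + induction 1.
      * exact I0.
      * exists (e n). apply HTe.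
      * apply Ip; assumption.
      * apply Is; assumption.
    + exact Dpsi.
    + intros x y [u hu] [a ha].
      replace (ip x y) with (ip u a).
      2:{ apply (ip_swap_eq ip Hip). symmetry. exact (hu _ _ ha). }
      apply (is_series_ext (fun k => Cmult (ip u (e k)) (ip (e k) a))).
      * intro k. rewrite (K1 x u k hu), (K2' a y k ha). reflexivity.
      * apply (parseval ip Hip e Hon).
  - intros x y. split.
    + intro h. split; [exists x; exact h|]. split; [apply Dpsi; exists x; exact h|].
      apply (is_series_ext (fun k => scal (ip x (e k)) (e k))).
      * intro k. rewrite (K2 x y k h). reflexivity.
      * apply (expansion ip Hip e Hon).
    + intros [[a ha] [_ hs]].
      assert (hs' : is_series (fun k => scal (ip a (e k)) (e k)) x).
      { eapply is_series_ext; [| exact hs]. intro k. simpl. rewrite (K2 a y k ha). reflexivity. }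
      pose proof (series_unique _ _ _ hs' (expansion ip Hip e Hon a)) as ->. exact ha.
  - intros x y. rewrite K4. split.
    + intro h. split; [exists x; exact h|]. split; [apply Dphi; exists x; exact h|].
      apply (is_series_ext (fun k => scal (ip x (e k)) (e k))).
      * intro k. rewrite (K1 y x k h). reflexivity.
      * apply (expansion ip Hip e Hon).
    + intros [[u hu] [_ hs]].
      assert (hs' : is_series (fun k => scal (ip u (e k)) (e k)) x).
      { eapply is_series_ext; [| exact hs]. intro k. simpl. rewrite (K1 y u k hu). reflexivity. }
      pose proof (series_unique _ _ _ hs' (expansion ip Hip e Hon u)) as ->. exact hu.
Qed.
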